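(* For $\varepsilon>0$ and $d\in\mathbb R^{R\times R}$ let $\hat J_{\varepsilon,d}(\beta)=\sum_{i,j=1}^R\exp\big([-d(i,j)-\beta(i)+\beta(j)]/\varepsilon\big)$ for $\beta\in\mathbb R^R$. Then minimizers of $\hat J_{\varepsilon,d}$ exist. Moreover, let $\varepsilon_1>\varepsilon_2>0$, $d_1,d_2\in\mathbb R^{R\times R}$, let $\beta_1^\dagger,\beta_2^\dagger$ be minimizers of $\hat J_{\varepsilon_1,d_1}$ and $\hat J_{\varepsilon_2,d_2}$, $\Delta d=d_2-d_1$, $\Delta\beta=\beta_2^\dagger-\beta_1^\dagger$, and $w\in\mathbb R^{R\times R}$, $w(i,j)=\max\{-\Delta d(i,j),\Delta d(j,i)\}$. Then $$\max\Delta\beta-\min\Delta\beta\le\mathrm{maxdiam}(w)+2\varepsilon_1R\log R,$$ where $\mathrm{maxdiam}(w)=\max\big\{\sum_{i=1}^{k-1}w(j_i,j_{i+1}):k\in\{2,\dots,R\},\ j_1,\dots,j_k\in\{1,\dots,R\}\text{ pairwise distinct}\big\}$ is the length of the longest cycle-free path in $\{1,\dots,R\}$ with edge lengths $w$.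
   Context: $\max\Delta\beta$ and $\min\Delta\beta$ denote the largest and smallest entries of the vector $\Delta\beta$. *)

(* Defs.v *)
From HB Require Import structures.
From mathcomp Require Import all_boot all_order all_algebra.
From mathcomp Require Import all_classical all_reals all_analysis.
Set Implicit Arguments. Unset Strict Implicit. Unset Printing Implicit Defensive.
Import Order.TTheory GRing.Theory Num.Theory.
Local Open Scope ring_scope.

(* Points are indexed by 'I_m (m = R in the paper). *)

Definition Jhat (R : realType) (m : nat) (eps : R) (d : 'I_m -> 'I_m -> R)
  (beta : 'I_m -> R) : R :=
  \sum_(i < m) \sum_(j < m) expR ((- d i j - beta i + beta j) / eps).

Definition is_minimizer (R : realType) (m : nat) (f : ('I_m -> R) -> R)
  (b : 'I_m -> R) : Prop := forall b' : 'I_m -> R, f b <= f b'.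

Definition vmax (R : realType) (n : nat) (v : 'I_n.+1 -> R) : R :=
  \big[Num.max/v ord0]_(i < n.+1) v i.
Definition vmin (R : realType) (n : nat) (v : 'I_n.+1 -> R) : R :=
  \big[Num.min/v ord0]_(i < n.+1) v i.

Definition pathlen (R : realType) (m : nat) (w : 'I_m -> 'I_m -> R)
  (s : seq 'I_m) : R :=
  \sum_(p <- zip s (behead s)) w p.1 p.2.

(* The default 0 of the fold only matters when m <= 1
   (empty maximum); for m >= 2 the true maximum is >= 0 for the w of the
   theorem. *)
Definition maxdiam (R : realType) (m : nat) (w : 'I_m -> 'I_m -> R) : R :=
  \big[Num.max/0]_(k < m.+1 | (2 <= k)%N)
     \big[Num.max/0]_(s : k.-tuple 'I_m | uniq s) pathlen w s.

(* Main.v *)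
Require Import Defs.
From HB Require Import structures.
From mathcomp Require Import all_boot all_order all_algebra.
From mathcomp Require Import all_classical all_reals all_analysis.
From mathcomp Require Import ring lra.
Import Order.TTheory GRing.Theory Num.Theory.
Import numFieldNormedType.Exports.
Local Open Scope ring_scope.

Section Helpers.
Set Implicit Arguments. Unset Strict Implicit. Unset Printing Implicit Defensive.


Lemma cont_sum (R : realType) (T : topologicalType) (I : Type) (r : seq I)
  (f : I -> T -> R) : (forall i, continuous (f i)) ->
  continuous (fun x => \sum_(i <- r) f i x).
Proof.
move=> fc; elim: r => [|a r IH].
  under eq_fun do rewrite big_nil. exact: cst_continuous.
under eq_fun do rewrite big_cons.
move=> x; apply: continuousD; [exact: (fc a x)| exact: (IH x)].
Qed.

Lemma Jhat_cont (R : realType) n (eps : R) (d : 'I_n -> 'I_n -> R) :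
  continuous (fun v : 'rV[R]_n => Jhat eps d (fun i => v ord0 i)).
Proof.
rewrite /Jhat; apply: cont_sum => i; apply: cont_sum => j.
move=> v; apply: continuous_comp; last exact: continuous_expR.
apply: continuousM; last exact: cst_continuous.
apply: continuousD; last exact: coord_continuous.
apply: continuousD; first exact: cst_continuous.
apply: continuousN; exact: coord_continuous.
Qed.



Lemma le_sum2 (R : realType) m (F : 'I_m -> 'I_m -> R) i j :
  (forall i j, 0 <= F i j) -> F i j <= \sum_i \sum_j F i j.
Proof.
move=> F0; rewrite (bigD1 i) //= (bigD1 j) //= -addrA lerDl.
apply: addr_ge0; first by apply: sumr_ge0 => k _.
by apply: sumr_ge0 => k _; apply: sumr_ge0.
Qed.

Lemma Jhat_shift (R : realType) m (eps : R) d (b : 'I_m -> R) c :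
  Jhat eps d (fun i => b i - c) = Jhat eps d b.
Proof.
apply: eq_bigr => i _; apply: eq_bigr => j _; congr (expR (_ / _)); ring.
Qed.

Lemma Jhat_bound (R : realType) m (eps : R) d (b : 'I_m -> R) J0 i j :
  0 < eps -> Jhat eps d b <= J0 -> b j - b i <= eps * ln J0 + d i j.
Proof.
move=> e0 bJ.
have h := le_trans (@le_sum2 _ _ _ i j (fun i j => ltW (expR_gt0 _))) bJ.
have J0p : 0 < J0 by apply: lt_le_trans h; exact: expR_gt0.
have : (- d i j - b i + b j) / eps <= ln J0.
  by rewrite -ler_expR lnK // posrE.
rewrite ler_pdivrMr // => h2; nra.
Qed.




Local Open Scope classical_set_scope.
Lemma exist_min (R : realType) n (eps : R) (d : 'I_n.+1 -> 'I_n.+1 -> R) :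
  0 < eps -> exists beta : 'I_n.+1 -> R, is_minimizer (Jhat eps d) beta.
Proof.
move=> e0.
pose J0 := Jhat eps d (fun _ => 0).
pose C := `|eps * ln J0| + \sum_i \sum_j `|d i j|.
have dC : forall i j, eps * ln J0 + d i j <= C.
  move=> i j; rewrite /C; apply: lerD; first exact: ler_norm.
  apply: le_trans (ler_norm _) _.
  by apply: (@le_sum2 _ _ (fun i j => `|d i j|)) => ? ?.
pose A := [set v : 'rV[R]_n.+1 | forall i, `[(- C)%R, C] (v ord0 i)].
have C0 : 0 <= C by apply: addr_ge0 => //; apply: sumr_ge0 => i _; apply: sumr_ge0.
have A0 : A !=set0.
  by exists 0 => i /=; rewrite mxE in_itv /= oppr_le0 C0.
have cA : compact A by apply: (@rV_compact _ _ (fun=> `[(- C)%R, C]%classic)) => i; exact: segment_compact.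
have [c cA' cmin] := EVT_min_rV A0 cA (continuous_subspaceT (@Jhat_cont R n.+1 eps d)).
exists (fun i => c ord0 i) => b.
pose b2 := fun i => b i - b ord0.
rewrite -(@Jhat_shift _ _ eps d b (b ord0)).
have [hle|hgt] := leP (Jhat eps d b2) J0.
  have : (\row_i b2 i) \in A.
    rewrite inE => i /=; rewrite mxE in_itv /=.
    have h1 := @Jhat_bound _ _ _ _ _ _ i ord0 e0 hle.
    have h2 := @Jhat_bound _ _ _ _ _ _ ord0 i e0 hle.
    have h3 := dC i ord0; have h4 := dC ord0 i.
    rewrite /b2 /= in h1 h2 *.
    apply/andP; split; lra.
  move=> /cmin; congr (_ <= _); apply: eq_bigr => i _; apply: eq_bigr => j _;
    by rewrite !mxE.
apply: (le_trans _ (ltW hgt)).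
have : (0 : 'rV[R]_n.+1) \in A.
  by rewrite inE => i /=; rewrite mxE in_itv /= oppr_le0 C0.
move=> /cmin; congr (_ <= _); apply: eq_bigr => i _; apply: eq_bigr => j _;
  by rewrite !mxE.
Qed.

Local Close Scope classical_set_scope.



Definition pif (R : realType) m (eps : R) (d : 'I_m -> 'I_m -> R) (b : 'I_m -> R) i j :=
  expR ((- d i j - b i + b j) / eps).

Definition flowS (R : realType) m (eps : R) d b (P : 'I_m -> 'I_m -> bool) :=
  \sum_(i < m) \sum_(j < m) (if P i j then pif eps d b i j else 0).

Lemma flowS_ge0 (R : realType) m (eps : R) d b P : 0 <= @flowS R m eps d b P.
Proof.
apply: sumr_ge0 => i _; apply: sumr_ge0 => j _; case: ifP => // _.
exact/ltW/expR_gt0.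
Qed.

Lemma quad_key (R : realType) (a b : R) : 0 <= a -> 0 <= b ->
  (forall x, 0 < x -> 0 <= (x - 1) * a + (x^-1 - 1) * b) -> a = b.
Proof.
move=> a0 b0 H.
have [ab0|abp] := eqVneq (a + b) 0.
  have -> : a = 0 by lra.
  lra.
have abp' : 0 < a + b by rewrite lt_def abp /=; lra.
have D1 : 0 < 3 * a + b by lra.
have D2 : 0 < a + 3 * b by lra.
pose x := (a + 3 * b) / (3 * a + b).
have x0 : 0 < x by rewrite /x divr_gt0.
have := H x x0.
have -> : (x - 1) * a + (x^-1 - 1) * b =
   - (2 * (b - a) ^+ 2 * (a + b)) / ((3 * a + b) * (a + 3 * b)).
  rewrite /x invf_div; field.
  by apply/andP; split; rewrite gt_eqF.
rewrite mulNr oppr_ge0 pmulr_lle0 ?invr_gt0 ?mulr_gt0 // => h.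
have : (b - a) ^+ 2 <= 0 by nra.
rewrite le_eqVlt ltNge sqr_ge0 orbF sqrf_eq0 subr_eq0 => /eqP //.
Qed.



Lemma cut_balance (R : realType) m (eps : R) d b (S : {set 'I_m}) :
  0 < eps -> is_minimizer (Jhat eps d) b ->
  flowS eps d b (fun i j => (i \notin S) && (j \in S)) =
  flowS eps d b (fun i j => (i \in S) && (j \notin S)).
Proof.
move=> e0 bmin.
apply: quad_key; [exact: flowS_ge0 | exact: flowS_ge0 |] => x x0.
pose b' := fun i => b i + (if i \in S then eps * ln x else 0).
have E : Jhat eps d b' = Jhat eps d b +
   ((x - 1) * flowS eps d b (fun i j => (i \notin S) && (j \in S)) +
    (x^-1 - 1) * flowS eps d b (fun i j => (i \in S) && (j \notin S))).
  rewrite /Jhat /flowS !mulr_sumr -!big_split /=; apply: eq_bigr => i _.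
  rewrite !mulr_sumr -!big_split /=; apply: eq_bigr => j _.
  rewrite /b' /pif.
  have en : eps != 0 by rewrite gt_eqF.
  case: (i \in S); case: (j \in S) => /=.
  - by rewrite !mulr0 !addr0; congr (expR (_ / _)); ring.
  - have -> : (- d i j - (b i + eps * ln x) + (b j + 0)) / eps =
              (- d i j - b i + b j) / eps + - ln x by field.
    rewrite expRD expRN lnK ?posrE // mulr0; ring.
  - have -> : (- d i j - (b i + 0) + (b j + eps * ln x)) / eps =
              (- d i j - b i + b j) / eps + ln x by field.
    rewrite expRD lnK ?posrE // mulr0; ring.
  - by rewrite !mulr0 !addr0; congr (expR (_ / _)); ring.
have := bmin b'; rewrite E lerDl //.
Qed.



Lemma ex_argmin (R : realType) (I : finType) (P : pred I) (F : I -> R) i0 :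
  P i0 -> exists2 i, P i & forall j, P j -> F i <= F j.
Proof. by move=> Pi0; case: (arg_minP F Pi0) => i Pi H; exists i. Qed.

Lemma le_flow (R : realType) m (eps : R) d b (P : 'I_m -> 'I_m -> bool) i j :
  P i j -> pif eps d b i j <= flowS eps d b P.
Proof.
move=> Pij.
have := @le_sum2 _ _ (fun i j => if P i j then pif eps d b i j else 0) i j.
rewrite Pij; apply=> k l; case: ifP => // _; exact/ltW/expR_gt0.
Qed.

Lemma cut_lemma (R : realType) m (eps1 eps2 : R) d1 d2 b1 b2
  (S : {set 'I_m}) i0 j0 :
  0 < eps2 -> eps2 <= eps1 ->
  is_minimizer (Jhat eps1 d1) b1 -> is_minimizer (Jhat eps2 d2) b2 ->
  i0 \in S -> j0 \notin S ->
  exists i, exists j, [/\ i \in S, j \notin S &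
    (b2 i - b1 i) - (b2 j - b1 j) <=
      Num.max (- (d2 i j - d1 i j)) (d2 j i - d1 j i) + 2 * eps1 * ln (m%:R : R)].
Proof.
move=> e2 e21 m1 m2 i0S j0S.
have e1 : 0 < eps1 by apply: lt_le_trans e21.
apply: contrapT => Hn.
set dl := 2 * eps1 * ln (m%:R : R).
have Hall : forall i j, i \in S -> j \notin S ->
  Num.max (- (d2 i j - d1 i j)) (d2 j i - d1 j i) + dl <
    (b2 i - b1 i) - (b2 j - b1 j).
  move=> i j iS jS; rewrite ltNge; apply/negP => h; apply: Hn.
  by exists i, j; split.
have m0 : (0 < m)%N by apply: leq_ltn_trans (leq0n _) (ltn_ord i0).
have lnm : 0 <= ln (m%:R : R) by apply: ln_ge0; rewrite ler1n.
pose N : R := m%:R ^+ 2.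
have N0 : 0 < N by rewrite exprn_gt0 // ltr0n.
have lnN : ln N = 2 * ln (m%:R : R) by rewrite lnXn ?ltr0n // mulr_natl.
have sumc : forall c : R, \sum_(i < m) \sum_(j < m) c = N * c.
  move=> c; rewrite sumr_const card_ord sumr_const card_ord.
  by rewrite -mulrnA -mulr_natr natrM -expr2 mulrC.
pose Pe := (fun e : 'I_m * 'I_m => (e.1 \notin S) && (e.2 \in S)).
pose Fe := (fun e : 'I_m * 'I_m => - (- d1 e.1 e.2 - b1 e.1 + b1 e.2)).
have Pe0 : Pe (j0, i0) by rewrite /Pe /= j0S i0S.
have [[p q] Pq Hmin] := ex_argmin Fe Pe0.
have /andP [pS qS] : (p \notin S) && (q \in S) by exact: Pq.
have bal1 := cut_balance S e1 m1.
have bal2 := cut_balance S e2 m2.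
have hIn1 : flowS eps1 d1 b1 (fun i j => (i \notin S) && (j \in S)) <=
     N * expR ((- d1 p q - b1 p + b1 q) / eps1).
  rewrite -sumc; apply: ler_sum => i _; apply: ler_sum => j _.
  case: ifP => h; last exact/ltW/expR_gt0.
  rewrite /pif ler_expR ler_pM2r ?invr_gt0 //.
  have := Hmin (i, j) h; rewrite /Fe /=; lra.
have hOut : forall i j, i \in S -> j \notin S ->
    - d1 i j - b1 i + b1 j <= eps1 * ln N + (- d1 p q - b1 p + b1 q).
  move=> i j iS jS.
  have h : (- d1 i j - b1 i + b1 j) / eps1 <=
           ln N + (- d1 p q - b1 p + b1 q) / eps1.
    rewrite -ler_expR expRD lnK ?posrE //; apply: le_trans hIn1.
    by rewrite bal1; apply: le_flow; rewrite iS jS.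
  rewrite ler_pdivrMr // mulrDl divfK ?gt_eqF // in h; lra.
pose K := (eps1 * ln N + (- d1 p q - b1 p + b1 q) - dl) / eps2.
have hOut2 : flowS eps2 d2 b2 (fun i j => (i \in S) && (j \notin S)) <=
     N * expR K.
  rewrite -sumc; apply: ler_sum => i _; apply: ler_sum => j _.
  case: ifP => h; last exact/ltW/expR_gt0.
  move/andP: h => [iS jS].
  rewrite /pif ler_expR ler_pM2r ?invr_gt0 //.
  have h1 := Hall i j iS jS.
  have h2 : - (d2 i j - d1 i j) <= Num.max (- (d2 i j - d1 i j)) (d2 j i - d1 j i).
    by rewrite le_max lexx.
  have h3 := hOut i j iS jS.
  lra.
have hIn2 : expR ((- d1 p q - b1 p + b1 q + dl) / eps2) <
     flowS eps2 d2 b2 (fun i j => (i \notin S) && (j \in S)).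
  have hf := @le_flow R m eps2 d2 b2 (fun i j => (i \notin S) && (j \in S)) p q.
  apply: lt_le_trans (hf _); last by rewrite /= pS qS.
  rewrite /pif ltr_expR ltr_pM2r ?invr_gt0 //.
  have h1 := Hall q p qS pS.
  have h2 : d2 p q - d1 p q <= Num.max (- (d2 q p - d1 q p)) (d2 p q - d1 p q).
    by rewrite le_max lexx orbT.
  lra.
rewrite bal2 in hIn2.
have := lt_le_trans hIn2 hOut2.
have eN : N * expR K = expR (ln N + K) by rewrite expRD lnK // posrE.
rewrite eN ltr_expR /K.
rewrite ltr_pdivrMr // mulrDl divfK ?gt_eqF // lnN /dl => h.
have h' : 0 <= (eps1 - eps2) * ln (m%:R : R) by apply: mulr_ge0 => //; lra.
lra.
Qed.



Lemma telescope (R : realType) m (Db : 'I_m -> R) (w : 'I_m -> 'I_m -> R) dl a s :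
  path (fun u v => Db u - Db v <= w u v + dl) a s ->
  Db a - Db (last a s) <= pathlen w (a :: s) + dl *+ size s.
Proof.
elim: s a => [|x s IH] a /=.
  by rewrite /pathlen /= big_nil subrr addr0.
move=> /andP [hax hp].
have := IH x hp; rewrite /pathlen /= big_cons /= mulrS => h; lra.
Qed.

Lemma pathlen_le (R : realType) n (w : 'I_n.+1 -> 'I_n.+1 -> R) a p :
  uniq (a :: p) -> pathlen w (a :: p) <= maxdiam w.
Proof.
case: p => [|x p] up.
  by rewrite /pathlen /= big_nil /maxdiam bigmax_ge_id.
have sz : (size (a :: x :: p) < n.+2)%N.
  have := max_card (mem (a :: x :: p)); rewrite (card_uniqP up) card_ord //.
pose k : 'I_n.+2 := Ordinal sz.
rewrite /maxdiam; apply: le_trans (le_bigmax_cond _ (j := k) _ _); last by [].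
exact: (le_bigmax_cond _ (j := in_tuple (a :: x :: p))).
Qed.

Lemma main2 (R : realType) n (eps1 eps2 : R) d1 d2 b1 b2 :
  0 < eps2 -> eps2 < eps1 ->
  is_minimizer (Jhat eps1 d1) b1 -> is_minimizer (Jhat eps2 d2) b2 ->
  forall a b : 'I_n.+1,
  (b2 a - b1 a) - (b2 b - b1 b) <=
   maxdiam (fun i j => Num.max (- (d2 i j - d1 i j)) (d2 j i - d1 j i)) +
   2 * eps1 * (n.+1)%:R * ln ((n.+1)%:R : R).
Proof.
move=> e2 e21 m1 m2 a b.
set dl := 2 * eps1 * ln ((n.+1)%:R : R).
set w := (fun i j => Num.max (- (d2 i j - d1 i j)) (d2 j i - d1 j i)).
pose Db := fun i => b2 i - b1 i.
pose E := fun u v => Db u - Db v <= w u v + dl.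
pose Reach k := exists s, path E a s && (last a s == k).
pose S := [set k | `[< Reach k >]].
have aS : a \in S by rewrite inE /Reach; apply/asboolP; exists [::]; rewrite /= eqxx.
have bS : b \in S.
  apply: contraT => bnS.
  have [i [j [iS jS hij]]] := cut_lemma e2 (ltW e21) m1 m2 aS bnS.
  move: iS; rewrite inE /Reach => /asboolP [s /andP [ps /eqP ls]].
  suff : j \in S by rewrite (negbTE jS).
  rewrite inE /Reach; apply/asboolP; exists (rcons s j).
  by rewrite rcons_path ps ls last_rcons eqxx /= andbT.
move: bS; rewrite inE /Reach => /asboolP [s /andP [ps /eqP ls]].
rewrite -ls; case: (shortenP ps) => p' pp' up' _.
have h := telescope pp'.
have hp := pathlen_le w up'.
have sz : (size p' <= n.+1)%N.
  have := max_card (mem (a :: p')); rewrite (card_uniqP up') card_ord /=.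
  by move/ltnW.
have dl0 : 0 <= dl.
  rewrite /dl; apply: mulr_ge0; first by apply: mulr_ge0 => //; apply: ltW; apply: lt_trans e21.
  by apply: ln_ge0; rewrite ler1n.
have hs : dl *+ size p' <= dl *+ n.+1 by exact: (ler_wpMn2l dl0 sz).
have -> : 2 * eps1 * (n.+1)%:R * ln ((n.+1)%:R : R) = dl *+ n.+1.
  by rewrite -mulr_natr /dl; ring.
rewrite /Db /= in h; lra.
Qed.

Lemma vmax_ex (R : realType) n (v : 'I_n.+1 -> R) : exists i, vmax v = v i.
Proof.
rewrite /vmax; apply: (big_ind (fun x => exists i, x = v i)).
- by exists ord0.
- move=> x y [i ->] [j ->]; rewrite maxEle; case: ifP => _; [by exists j | by exists i].
- by move=> i _; exists i.
Qed.

Lemma vmin_ex (R : realType) n (v : 'I_n.+1 -> R) : exists i, vmin v = v i.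
Proof.
rewrite /vmin; apply: (big_ind (fun x => exists i, x = v i)).
- by exists ord0.
- move=> x y [i ->] [j ->]; rewrite minEle; case: ifP => _; [by exists i | by exists j].
- by move=> i _; exists i.
Qed.

End Helpers.

(* R (number of points in the paper) is n.+1 here *)
Theorem mainTheorem9 (R : realType) (n : nat) :
  (forall (eps : R) (d : 'I_n.+1 -> 'I_n.+1 -> R), 0 < eps ->
     exists beta : 'I_n.+1 -> R, is_minimizer (Jhat eps d) beta) /\
  (forall (eps1 eps2 : R) (d1 d2 : 'I_n.+1 -> 'I_n.+1 -> R)
          (beta1 beta2 : 'I_n.+1 -> R),
     0 < eps2 -> eps2 < eps1 ->
     is_minimizer (Jhat eps1 d1) beta1 ->
     is_minimizer (Jhat eps2 d2) beta2 ->
     let Dd := fun i j => d2 i j - d1 i j in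
     let Db := fun i => beta2 i - beta1 i in
     let w := fun i j => Num.max (- Dd i j) (Dd j i) in
     vmax Db - vmin Db <=
       maxdiam w + 2 * eps1 * (n.+1)%:R * ln ((n.+1)%:R : R)).
Proof.
split; first by move=> eps d e0; exact: exist_min.
move=> eps1 eps2 d1 d2 beta1 beta2 e2 e21 m1 m2; cbv zeta.
have [a ha] := vmax_ex (fun i => beta2 i - beta1 i).
have [b hb] := vmin_ex (fun i => beta2 i - beta1 i).
rewrite ha hb. have := main2 e2 e21 m1 m2 a b. exact.
Qed.
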